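(* Let $\mu \in \mathbb{R}$, $\sigma_u^2 > 0$ and $V > 0$ be fixed, and let $F(\cdot, V)$ be the function of $b \in \mathbb{R}$ defined by \[ F(b,V) = \begin{cases} \displaystyle\int_{\mu}^\infty \Big[1 - \Phi \Big( \frac{- b(u - \mu)}{\sqrt{V - b^2 \sigma_u^2}}\Big) \Big] p(u)\, du, & - \sqrt{V/\sigma_u^2} < b < \sqrt{V/\sigma_u^2}, \\[2mm] \int_{\mu}^\infty p(u)\, du = \tfrac{1}{2}, & b \geq \sqrt{V/\sigma_u^2}, \\[1mm] 0, & b \leq - \sqrt{V/\sigma_u^2}. \end{cases} \] Then $b \mapsto F(b,V)$ is strictly monotonically increasing on the open interval $\left(- \sqrt{V/\sigma_u^2},\ \sqrt{V/\sigma_u^2}\right)$.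
   Context: $\Phi(x) = \int_{-\infty}^x \frac{1}{\sqrt{2\pi}} e^{-s^2/2}\, ds$ is the standard normal cumulative distribution function, and $p(u) = \frac{1}{\sqrt{2\pi\sigma_u^2}} \exp\!\left(-\frac{(u-\mu)^2}{2\sigma_u^2}\right)$ is the density of a $\mathcal{N}(\mu,\sigma_u^2)$ random variable. *)

(* Defs.v *)
From HB Require Import structures.
From mathcomp Require Import all_boot all_order all_algebra.
From mathcomp Require Import all_classical all_reals all_analysis.
Set Implicit Arguments. Unset Strict Implicit. Unset Printing Implicit Defensive.
Import Order.TTheory GRing.Theory Num.Theory.
Local Open Scope classical_set_scope.
Local Open Scope ring_scope.

Definition std_gauss {R : realType} (s : R) : R :=
  (Num.sqrt (pi *+ 2))^-1 * expR (- (s ^+ 2) / 2).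

Definition Phi {R : realType} (x : R) : R :=
  Rintegral lebesgue_measure `]-oo, x] std_gauss.

(* density of N(mu, su2), su2 = sigma_u^2 the variance *)
Definition pdens {R : realType} (mu su2 u : R) : R :=
  (Num.sqrt (pi *+ 2 * su2))^-1 * expR (- ((u - mu) ^+ 2) / (su2 *+ 2)).

Definition Ffun {R : realType} (mu su2 V b : R) : R :=
  let c := Num.sqrt (V / su2) in
  if (- c < b) && (b < c) then
    Rintegral lebesgue_measure `[mu, +oo[
      (fun u => (1 - Phi (- b * (u - mu) / Num.sqrt (V - b ^+ 2 * su2))) * pdens mu su2 u)
  else if c <= b then 1 / 2 else 0.

(* Main.v *)
Require Import Defs.
From HB Require Import structures.
From mathcomp Require Import all_boot all_order all_algebra.
From mathcomp Require Import all_classical all_reals all_analysis.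
From mathcomp Require Import measurable_realfun.
From mathcomp Require Import ring lra.
Import Order.TTheory GRing.Theory Num.Theory.
Local Open Scope classical_set_scope.
Local Open Scope ring_scope.

Section helpers.
Context {R : realType}.
Notation leb := (@lebesgue_measure R).

Lemma Rint_pos (D E : set (measurableTypeR R)) (f : R -> R) : measurable D -> measurable E ->
  E `<=` D -> leb.-integrable D (EFin \o f) ->
  (forall x, D x -> 0 <= f x) -> (forall x, E x -> 0 < f x) ->
  (0 < leb E)%E -> 0 < Rintegral leb D f.
Proof.
move=> mD mE ED fi f0 fpos mE0.
have mf := measurable_int leb fi.
have fin := integrable_fin_num mD fi.
have ge0 : (0 <= \int[leb]_(x in D) (f x)%:E)%E.
  by apply: integral_ge0 => x Dx; rewrite lee_fin f0.
rewrite /Rintegral; apply: fine_gt0; apply/andP; split; last first.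
  by move: fin; rewrite ge0_fin_numE.
rewrite lt0e ge0 andbT; apply/negP => /eqP I0.
have : ae_eq leb D (EFin \o f) (cst 0%E).
  apply/(ae_eq_integral_abs leb mD mf); rewrite -I0.
  apply: eq_integral => x /set_mem Dx /=.
  by rewrite ger0_norm // f0.
case=> N [mN N0 sub].
have : leb E = 0%E.
  apply: (subset_measure0 mE mN) => // x Ex; apply: sub => /= H.
  have := fpos x Ex; rewrite -lte_fin (H (ED x Ex)) ltxx //.
by move=> E0; move: mE0; rewrite E0 ltxx.
Qed.


Lemma std_gaussE : @std_gauss R = normal_pdf 0 1.
Proof.
apply/funext => x; rewrite normal_pdfE ?oner_neq0 //.
by rewrite /std_gauss /normal_peak /normal_fun expr1n mul1r subr0.
Qed.

Lemma pdensE (m su2 : R) : 0 < su2 -> pdens m su2 = normal_pdf m (Num.sqrt su2).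
Proof.
move=> h; apply/funext => x; rewrite normal_pdfE; last by rewrite gt_eqF // sqrtr_gt0.
by rewrite /pdens /normal_peak /normal_fun sqr_sqrtr ?ltW // mulrnAl (mulrC pi).
Qed.

Lemma gauss_int (A : set (measurableTypeR R)) : measurable A ->
  leb.-integrable A (EFin \o std_gauss).
Proof.
move=> mA; apply: (integrableS measurableT mA (subsetT _)).
rewrite std_gaussE; exact: (integrable_normal_pdf 0 1).
Qed.

Lemma gauss_gt0 (x : R) : 0 < std_gauss x.
Proof.
rewrite /std_gauss mulr_gt0 ?expR_gt0 // invr_gt0 sqrtr_gt0.
by rewrite pmulrn_lgt0 // pi_gt0.
Qed.

Lemma gauss_ge0 (x : R) : 0 <= std_gauss x.
Proof. exact/ltW/gauss_gt0. Qed.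

Lemma Phi_ge0 (x : R) : 0 <= Phi x.
Proof. by apply: Rintegral_ge0 => y _; apply: gauss_ge0. Qed.

Lemma Phi_le1 (x : R) : Phi x <= 1.
Proof.
have -> : (1 : R) = fine (\int[leb]_(y in [set: measurableTypeR R]) (std_gauss y)%:E)%E.
  by rewrite std_gaussE integral_normal_pdf.
rewrite /Phi /Rintegral fine_le //.
- by apply: integrable_fin_num => //; exact: gauss_int.
- by apply: integrable_fin_num => //; exact: gauss_int.
- apply: ge0_subset_integral => //.
  + by apply/measurable_EFinP; rewrite std_gaussE; exact: measurable_normal_pdf.
  + by move=> y _; rewrite lee_fin gauss_ge0.
Qed.

Lemma Phi_lt (x y : R) : x < y -> Phi x < Phi y.
Proof.
move=> xy; rewrite -subr_gt0 /Phi Rintegral_itvB //; last 2 first.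
- exact: gauss_int.
- by rewrite bnd_simp ltW.
apply: (@Rint_pos `]x, y] `]x, y]) => //.
- exact: gauss_int.
- by move=> z _; exact: (gauss_gt0 z).
- by rewrite lebesgue_measure_itv /= lte_fin xy -EFinD lte_fin subr_gt0.
Qed.

Lemma Phi_le (x y : R) : x <= y -> Phi x <= Phi y.
Proof. by rewrite le_eqVlt => /predU1P[->//|/Phi_lt/ltW]. Qed.


Lemma s_pos (su2 V b : R) : 0 < su2 -> 0 < V ->
  - Num.sqrt (V / su2) < b -> b < Num.sqrt (V / su2) -> 0 < V - b ^+ 2 * su2.
Proof.
move=> hs hV h1 h2.
have hc : Num.sqrt (V / su2) ^+ 2 = V / su2 by rewrite sqr_sqrtr // divr_ge0 // ltW.
have : b ^+ 2 < V / su2.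
  rewrite -hc; set c := Num.sqrt _ in h1 h2 *; nra.
by rewrite subr_gt0 ltr_pdivlMr.
Qed.

Lemma g_mono (su2 V b1 b2 : R) : 0 < su2 -> 0 < V - b1 ^+ 2 * su2 ->
  0 < V - b2 ^+ 2 * su2 -> b1 < b2 ->
  b1 / Num.sqrt (V - b1 ^+ 2 * su2) < b2 / Num.sqrt (V - b2 ^+ 2 * su2).
Proof.
move=> hs p1 p2 b12.
have s1 : 0 < Num.sqrt (V - b1 ^+ 2 * su2) by rewrite sqrtr_gt0.
have s2 : 0 < Num.sqrt (V - b2 ^+ 2 * su2) by rewrite sqrtr_gt0.
rewrite ltr_pdivrMr // mulrAC ltr_pdivlMr //.
have [b10|b10] := leP 0 b1.
  have : Num.sqrt (V - b2 ^+ 2 * su2) <= Num.sqrt (V - b1 ^+ 2 * su2).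
    rewrite (ler_sqrt _ (ltW p1)).
    have hb : b1 ^+ 2 <= b2 ^+ 2 by nra.
    nra.
  set t1 := Num.sqrt _ in s1 *; set t2 := Num.sqrt _ in s2 *; nra.
have [b20|b20] := leP 0 b2.
  set t1 := Num.sqrt _ in s1 *; set t2 := Num.sqrt _ in s2 *; nra.
have : Num.sqrt (V - b1 ^+ 2 * su2) <= Num.sqrt (V - b2 ^+ 2 * su2).
  rewrite (ler_sqrt _ (ltW p2)).
  have hb : b2 ^+ 2 <= b1 ^+ 2 by nra.
  nra.
set t1 := Num.sqrt _ in s1 *; set t2 := Num.sqrt _ in s2 *; nra.
Qed.


Lemma Phi_meas : measurable_fun [set: R] (@Phi R).
Proof. by apply: nondecreasing_measurable => // x y; exact: Phi_le. Qed.

Lemma f_int (m su2 b s : R) : 0 < su2 ->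
  leb.-integrable `[m, +oo[
    (EFin \o (fun u => (1 - Phi (- b * (u - m) / s)) * pdens m su2 u)).
Proof.
move=> hs.
have mI : measurable (`[m, +oo[ : set (measurableTypeR R)) by [].
apply: (le_integrable mI (g := EFin \o pdens m su2)).
- apply/measurable_EFinP; apply: measurable_funM.
  + apply: measurable_funB => //.
    have hg : measurable_fun (`[m, +oo[ : set (measurableTypeR R))
        (fun u : R => - b * (u - m) / s).
      apply: measurable_funM => //; apply: measurable_funM => //.
      exact: measurable_funB.
    exact: (measurableT_comp Phi_meas hg).
  + by rewrite pdensE //; apply: measurable_funS (measurable_normal_pdf _ _).
- move=> u _ /=; rewrite lee_fin normrM ler_piMl //.
  rewrite ger0_norm ?subr_ge0 ?Phi_le1 //.
  by rewrite lerBlDr lerDl Phi_ge0.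
- apply: (integrableS measurableT mI (subsetT _)).
  by rewrite pdensE //; exact: integrable_normal_pdf.
Qed.

End helpers.

Lemma oneB (R : realType) (x y : R) : (1 - x) - (1 - y) = y - x.
Proof. by ring. Qed.

Lemma affE (R : realType) (b u m s : R) : - b * (u - m) / s = - ((u - m) * (b / s)).
Proof. by ring. Qed.

Theorem lemma1 (R : realType) (mu su2 V : R) (hsu2 : 0 < su2) (hV : 0 < V) :
  forall b1 b2 : R,
    - Num.sqrt (V / su2) < b1 -> b2 < Num.sqrt (V / su2) -> b1 < b2 ->
    Ffun mu su2 V b1 < Ffun mu su2 V b2.
Proof.
move=> b1 b2 hb1 hb2 b12.
have hb1' : b1 < Num.sqrt (V / su2) by exact: lt_trans b12 hb2.
have hb2' : - Num.sqrt (V / su2) < b2 by exact: lt_trans hb1 b12.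
have p1 := @s_pos R su2 V b1 hsu2 hV hb1 hb1'.
have p2 := @s_pos R su2 V b2 hsu2 hV hb2' hb2.
have g12 := @g_mono R su2 V b1 b2 hsu2 p1 p2 b12.
rewrite /Ffun hb1 hb1' hb2 hb2' /=.
rewrite -subr_gt0 -RintegralB //; try exact: f_int.
apply: (@Rint_pos R `[mu, +oo[ `]mu, +oo[) => //.
- by move=> u /=; rewrite !in_itv /= !andbT; exact: ltW.
- have mI : measurable (`[mu, +oo[ : set (measurableTypeR R)) by [].
  exact: (integrableB mI (f_int mu su2 b2 (Num.sqrt (V - b2 ^+ 2 * su2)) hsu2)
                        (f_int mu su2 b1 (Num.sqrt (V - b1 ^+ 2 * su2)) hsu2)).
- move=> u /=; rewrite in_itv /= andbT => hu.
  rewrite -mulrBl mulr_ge0 //; last by rewrite pdensE // normal_pdf_ge0.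
  rewrite oneB subr_ge0; apply: Phi_le.
  by rewrite !affE lerN2 ler_wpM2l ?subr_ge0 // ltW.
- move=> u /=; rewrite in_itv /= andbT => hu.
  rewrite -mulrBl mulr_gt0 //; last first.
    rewrite pdensE // normal_pdfE ?gt_eqF ?sqrtr_gt0 //.
    by rewrite mulr_gt0 ?expR_gt0 // normal_peak_gt0 // gt_eqF // sqrtr_gt0.
  rewrite oneB subr_gt0; apply: Phi_lt.
  by rewrite !affE ltrN2 ltr_pM2l ?subr_gt0.
- by rewrite lebesgue_measure_itv /= ltry addye.
Qed.
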